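(* Let $R$ be an exchange ring and $\alpha=[a_1\ a_2\ \cdots\ a_n]$ a right unimodular row over $R$ (i.e. $a_1R+\cdots+a_nR=R$), with $n\ge 2$. Then $\alpha$ can be transformed by a finite sequence of elementary column operations to a row $[c_1\ c_2\ \cdots\ c_n]$ such that $c_2$ is a (von Neumann) regular element, $c_2\in Ra_2$, and $c_2R=(1-g)R$ for some idempotent $g\in R$ with $RgR=R$.
   Context: All rings are unital. A ring $R$ is an exchange ring if for every $a\in R$ there is an idempotent $e\in aR$ with $1-e\in(1-a)R$ (equivalently, $R_R$ has the finite exchange property). An element $x\in R$ is regular if $xyx=x$ for some $y\in R$. An elementary column operation on a row $[c_1\ \cdots\ c_n]$ replaces some entry $c_i$ by $c_i+c_jr$ for some $j\neq i$ and $r\in R$. *)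

(* Defs.v *)
From HB Require Import structures.
From mathcomp Require Import all_boot all_order all_algebra.
From Stdlib Require Import Relation_Operators.
Set Implicit Arguments. Unset Strict Implicit. Unset Printing Implicit Defensive.
Import GRing.Theory.
Local Open Scope ring_scope.

Definition in_rideal (R : pzRingType) (a x : R) : Prop := exists r, x = a * r.
Definition in_lideal (R : pzRingType) (a x : R) : Prop := exists r, x = r * a.

Definition idem (R : pzRingType) (e : R) : Prop := e * e = e.

Definition exchange_ring (R : pzRingType) : Prop :=
  forall a : R, exists e : R,
    [/\ idem e, in_rideal a e & in_rideal (1 - a) (1 - e)].

Definition regular (R : pzRingType) (x : R) : Prop := exists y, x * y * x = x.

Definition right_unimodular (R : pzRingType) (n : nat) (a : 'rV[R]_n) : Prop :=
  exists b : 'I_n -> R, \sum_(i < n) a 0 i * b i = 1.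

Definition elem_col_op (R : pzRingType) (n : nat) (c d : 'rV[R]_n) : Prop :=
  exists (i j : 'I_n) (r : R),
    i != j /\ d = \row_k (if k == i then c 0 i + c 0 j * r else c 0 k).

Definition col_reachable (R : pzRingType) (n : nat) : 'rV[R]_n -> 'rV[R]_n -> Prop :=
  clos_refl_trans _ (@elem_col_op R n).

(* the two-sided ideal RgR equals R: 1 = sum_i x_i g y_i *)
Definition full_idempotent_ideal (R : pzRingType) (g : R) : Prop :=
  exists (m : nat) (x y : 'I_m -> R), \sum_(i < m) x i * g * y i = 1.

Definition same_rideal (R : pzRingType) (x y : R) : Prop :=
  in_rideal y x /\ in_rideal x y.

(* Main.v *)
Require Import Defs.
From HB Require Import structures.
From mathcomp Require Import all_boot all_order all_algebra.
From Stdlib Require Import Relation_Operators.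
Import GRing.Theory.
Local Open Scope ring_scope.

Lemma reach_add (R : pzRingType) (m : nat) (c : 'rV[R]_m) (i : 'I_m)
  (r : 'I_m -> R) (l : seq 'I_m) :
  col_reachable c (\row_k (if k == i then c 0 i + \sum_(j <- l | j != i) c 0 j * r j else c 0 k)).
Proof.
elim: l => [|j l IH].
  rewrite big_nil.
  have -> : \row_k (if k == i then c 0 i + 0 else c 0 k) = c.
    by apply/rowP => k; rewrite mxE addr0; case: eqP => // ->.
  exact: rt_refl.
rewrite big_cons; case: ifP => Hj; last exact IH.
apply: rt_trans IH _; apply: rt_step.
exists i, j, (r j); split; first by rewrite eq_sym Hj.
apply/rowP => k; rewrite !mxE eqxx (negbTE Hj).
case: (k == i) => //.
by rewrite -addrA [_ + c 0 j * r j]addrC addrA.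
Qed.

Lemma reach_mod (R : pzRingType) (m : nat) (c : 'rV[R]_m) (i : 'I_m)
  (r : 'I_m -> R) (l : seq 'I_m) : uniq l ->
  col_reachable c (\row_k (if (k != i) && (k \in l) then c 0 k + c 0 i * r k else c 0 k)).
Proof.
elim: l => [|j l IH] /=.
  move=> _.
  have -> : \row_k (if (k != i) && (k \in [::]) then c 0 k + c 0 i * r k else c 0 k) = c.
    by apply/rowP => k; rewrite mxE in_nil andbF.
  exact: rt_refl.
case/andP => Hjl Hu.
have {}IH := IH Hu.
case: (eqVneq j i) => Hji.
  have -> : \row_k (if (k != i) && (k \in j :: l) then c 0 k + c 0 i * r k else c 0 k) =
            \row_k (if (k != i) && (k \in l) then c 0 k + c 0 i * r k else c 0 k).
    apply/rowP => k; rewrite !mxE in_cons; case: (eqVneq k i) => //= Hki.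
    by rewrite Hji (negbTE Hki).
  exact: IH.
apply: rt_trans IH _; apply: rt_step.
exists j, i, (r j); split; first by [].
apply/rowP => k; rewrite !mxE eqxx (negbTE Hjl) andbF /=.
rewrite in_cons.
case: (eqVneq k j) => [->|Hkj] /=; first by rewrite Hji.
by [].
Qed.

Lemma idemC (R : pzRingType) (e : R) : e * e = e -> (1 - e) * (1 - e) = 1 - e.
Proof. by move=> He; rewrite mulrBl mul1r mulrBr mulr1 He subrr subr0. Qed.

Lemma idem_l (R : pzRingType) (e : R) : e * e = e -> (1 - e) * e = 0.
Proof. by move=> He; rewrite mulrBl mul1r He subrr. Qed.

Lemma idem_r (R : pzRingType) (e : R) : e * e = e -> e * (1 - e) = 0.
Proof. by move=> He; rewrite mulrBr mulr1 He subrr. Qed.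

Lemma sum_delta (R : pzRingType) (m : nat) (i0 i1 : 'I_m) (Y : 'I_m -> R) :
  i0 != i1 ->
  \sum_(j | j != i1) (if j == i0 then Y j else 0) = Y i0.
Proof.
move=> H; rewrite (bigD1 i0) //= eqxx big1 ?addr0 // => j /andP [_ Hj].
by rewrite (negbTE Hj).
Qed.

Theorem corollary2p6 (R : pzRingType) (n : nat) (a : 'rV[R]_n.+2) :
  exchange_ring R -> right_unimodular a ->
  exists c : 'rV[R]_n.+2,
    col_reachable a c /\
    [/\ regular (c 0 (inord 1)),
        in_lideal (a 0 (inord 1)) (c 0 (inord 1)) &
        exists g : R, [/\ idem g, full_idempotent_ideal g &
                          same_rideal (c 0 (inord 1)) (1 - g)]].
Proof.
move=> Hex [beta Hbeta].
set i1 : 'I_n.+2 := inord 1.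
set i0 : 'I_n.+2 := ord0.
have Hi01 : i0 != i1 by rewrite -val_eqE /= inordK.
set b := a 0 i1.
set x := b * beta i1.
have Hsum1 : \sum_(j | j != i1) a 0 j * beta j = 1 - x.
  move: Hbeta; rewrite (bigD1 i1) //= => H.
  by rewrite -H addrC addrK.
have [e [He [r1 Her1] [v' Hv']]] := Hex x.
rewrite /idem in He.
set t := beta i1 * r1.
have bt : b * t = e by rewrite /t mulrA.
set s := fun j => beta j * v' * (1 - e).
set p := fun j => (1 - e) * a 0 j.
have se : forall j, s j * e = 0 by move=> j; rewrite /s -mulrA idem_l // mulr0.
have ep : forall j, (1 - e) * p j = p j by move=> j; rewrite /p mulrA idemC.
have F2 : \sum_(j | j != i1) p j * s j = 1 - e.
  have -> : \sum_(j | j != i1) p j * s j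
          = (1 - e) * (\sum_(j | j != i1) a 0 j * beta j) * (v' * (1 - e)).
    rewrite mulr_sumr mulr_suml; apply: eq_bigr => j _.
    by rewrite /p /s !mulrA.
  rewrite Hsum1 mulrA -[(1 - e) * (1 - x) * v']mulrA -Hv' idemC // idemC //.
set z := e * (1 - s i0 * p i0).
have [f [Hf [w0 Hw0] [v Hv]]] := Hex z.
rewrite /idem in Hf.
have ez : e * z = z by rewrite /z mulrA He.
have ef : e * f = f by rewrite Hw0 mulrA ez.
set f' := f * e.
have ef' : e * f' = f' by rewrite /f' mulrA ef.
have f'e : f' * e = f' by rewrite /f' -mulrA He.
have f'f' : f' * f' = f' by rewrite /f' mulrA -[f * e * f]mulrA ef Hf.
set w := w0 * e.
have f'w : f' * (1 - s i0 * p i0) * w = f'.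
  rewrite /w -{1}f'e -[f' * e * _]mulrA -/z mulrA -[f' * z * w0]mulrA -Hw0.
  by rewrite /f' -[f * e * f]mulrA ef Hf.
set g := 1 - e + f'.
set X := fun j : 'I_n.+2 => f' * ((if j == i0 then 1 else 0) - s i0 * p j).
have eX : forall j, e * X j = X j by move=> j; rewrite /X mulrA ef'.
set c1 := \row_k (if (k != i1) && (k \in index_enum 'I_n.+2)
                  then a 0 k + a 0 i1 * (t * (X k - a 0 k)) else a 0 k).
have Hc1 : col_reachable a c1 by apply: reach_mod; exact: index_enum_uniq.
have c1j : forall j, j != i1 -> c1 0 j = p j + X j.
  move=> j Hj; rewrite /c1 mxE Hj mem_index_enum /= -/b mulrA bt.
  by rewrite mulrBr eX /p mulrBl mul1r addrCA addrC.
have c1i : c1 0 i1 = b by rewrite /c1 mxE eqxx.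
set m := fun j : 'I_n.+2 => s j * (1 - p i0 * w) + (if j == i0 then w else 0).
have Xs : \sum_(j | j != i1) X j * s j = 0.
  have -> : \sum_(j | j != i1) X j * s j
     = \sum_(j | j != i1) (if j == i0 then f' * s j else 0)
       - f' * s i0 * (\sum_(j | j != i1) p j * s j).
    rewrite mulr_sumr -sumrB; apply: eq_bigr => j _.
    rewrite /X mulrBr mulrBl !mulrA; congr (_ - _).
    by case: (j == i0); rewrite ?mulr1 ?mulr0 ?mul0r.
  by rewrite sum_delta // F2 mulrBr mulr1 -mulrA se mulr0 subr0 subrr.
have Key : \sum_(j | j != i1) c1 0 j * m j = g.
  rewrite (eq_bigr (fun j => (p j + X j) * s j * (1 - p i0 * w)
                       + (if j == i0 then (p j + X j) * w else 0))); last first.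
    move=> j Hj; rewrite c1j // /m mulrDr mulrA; congr (_ + _).
    by case: (j == i0); rewrite ?mulr0.
  rewrite big_split /= sum_delta // -mulr_suml.
  rewrite (eq_bigr (fun j => p j * s j + X j * s j)); last by move=> j _; rewrite mulrDl.
  rewrite big_split /= F2 Xs addr0.
  rewrite mulrBr mulr1 mulrA ep mulrDl /X eqxx f'w.
  by rewrite /g addrA subrK.
set c := \row_k (if k == i1 then c1 0 i1 + \sum_(j <- index_enum 'I_n.+2 | j != i1) c1 0 j * (- (m j * b)) else c1 0 k).
have Hc : col_reachable c1 c by apply: reach_add.
have ci : c 0 i1 = (1 - g) * b.
  rewrite /c mxE eqxx c1i.
  rewrite (eq_bigr (fun j => - (c1 0 j * m j * b))); last by move=> j _; rewrite mulrN mulrA.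
  by rewrite sumrN -mulr_suml Key mulrBl mul1r.
have f'1e : f' * (1 - e) = 0 by rewrite mulrBr mulr1 f'e subrr.
have e1f' : (1 - e) * f' = 0 by rewrite -ef' mulrA idem_l // mul0r.
have Hg : g * g = g.
  by rewrite /g mulrDl [(1 - e) * _]mulrDr [f' * _]mulrDr idemC // f'1e e1f' f'f' addr0 add0r.
have Hg1 : 1 - g = e - f' by rewrite /g opprD opprB addrA [1 + _]addrC subrK.
have Hge : (1 - g) * e = 1 - g by rewrite Hg1 mulrBl He f'e.
have Hg1b : (1 - g) * (1 - g) = 1 - g by apply: idemC.
exists c; split; first exact: rt_trans Hc1 Hc.
split.
- by exists t; rewrite ci -[(1 - g) * b * t]mulrA bt Hge mulrA Hg1b.
- rewrite /in_lideal.
  by exists (1 - g); rewrite ci.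
exists g; split => //.
- exists 2%N, (fun i : 'I_2 => if val i == 0%N then 1 else e * s i0),
              (fun i : 'I_2 => if val i == 0%N then 1 else p i0 * v * e).
  rewrite big_ord_recl big_ord1 /= mul1r mulr1.
  have gp : g * p i0 = p i0.
    have fp : f' * p i0 = 0 by rewrite -ep mulrA f'1e mul0r.
    by rewrite /g mulrDl ep fp addr0.
  rewrite -[_ * g * _]mulrA [g * (p i0 * v * e)]mulrA [g * (p i0 * v)]mulrA gp.
  have Hef : e - f' = e * s i0 * p i0 * v * e.
    have -> : e - f' = e * (1 - f) * e by rewrite mulrBr mulr1 mulrBl He ef.
    rewrite Hv mulrA mulrBr mulr1 ez /z mulrBr mulr1 subKr.
    by rewrite !mulrA.
  have -> : e * s i0 * (p i0 * v * e) = e - f' by rewrite Hef !mulrA.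
  by rewrite /g -addrA [f' + _]addrCA subrr addr0 subrK.
- split; first by exists b; rewrite ci.
  by exists t; rewrite ci -mulrA bt Hge.
Qed.
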